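(* Let $0<\beta_1<\beta_2$, let $g_{\mathrm{Foot},\beta_1,\beta_2}$ be the football soliton of the context, written on $S^2\setminus\{N,S\}$ as $g=\frac{1}{2\varphi(\tau)}d\tau\otimes d\tau+2\varphi(\tau)d\theta\otimes d\theta$ with $\tau\in(0,\beta_1+\beta_2)$, and let $a=a(\beta_1,\beta_2)$ be as in the context. Set $u=a(\beta_1+\beta_2-\tau)\in[0,a(\beta_1+\beta_2)]$ and regard $\varphi$ as a function of $u$. Then for every $L>0$ and every integer $k\ge0$, $$\frac{a}{\beta_2}\varphi(u)\longrightarrow\frac{e^u-1}{e^u}$$ uniformly in $C^k([0,L])$ as $\beta_1/\beta_2\to0$ (considering only $(\beta_1,\beta_2)$ with $L<a(\beta_1+\beta_2)$).
   Context: Regard $S^2=\mathbb{C}\cup\{\infty\}$ as the Riemann sphere with $N=\{z=0\}$, $S=\{z=\infty\}$, $z=|z|e^{i\theta}$. For $0<\beta_1<\beta_2$, the football soliton $g_{\mathrm{Foot},\beta_1,\beta_2}$ is the unique Riemannian metric on $S^2\setminus\{N,S\}$, compatible with the complex structure, with conical singularities of angle $2\pi\beta_1$ at $N$ and $2\pi\beta_2$ at $S$, of area $2\pi(\beta_1+\beta_2)$, whose Kähler form $\omega$ satisfies $\mathrm{Ric}\,\omega=\omega-\mathcal{L}_X\omega+2\pi(1-\beta_1)\delta_N+2\pi(1-\beta_2)\delta_S$ for a gradient vector field $X$. It is rotationally symmetric: $\omega=\sqrt{-1}\partial\bar\partial f(s)$ on $\mathbb{C}^*$ with $s=\log|z|^2$,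 $f$ strictly convex; $\tau=f'(s)$ (normalized so $\tau\in(0,\beta_1+\beta_2)$, $\tau\to0$ at $N$) and $\varphi(\tau)=f''(s)$. The number $a=a(\beta_1,\beta_2)$ is the unique element of $(0,1/\beta_1)$ with $a\beta_1-1+(a\beta_2+1)e^{-a(\beta_1+\beta_2)}=0$. *)

(* Defs.v *)
From Stdlib Require Import Reals.
From Coquelicot Require Import Coquelicot.
Open Scope R_scope.

Definition football_a (b1 b2 a : R) : Prop :=
  0 < a < 1 / b1 /\
  a * b1 - 1 + (a * b2 + 1) * exp (- (a * (b1 + b2))) = 0.

(* Momentum profile phi(tau) = f''(s) of the football soliton with cone
   angles 2 pi b1 at N (tau = 0) and 2 pi b2 at S (tau = b1 + b2).
   In momentum coordinates, omega = i dd^c f(s), Ric omega = -i dd^c log f'',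
   and the soliton equation Ric omega = omega - L_X omega (X rotationally
   symmetric holomorphic gradient field) reduces, after one s-derivative,
   to  phi'(tau) = -tau + c phi(tau) + b  for real constants c, b
   (c encodes X, b a pluriharmonic ambiguity). The conical singularities
   (angles 2 pi b1, 2 pi b2; metric g = dtau^2/(2 phi) + 2 phi dtheta^2)
   are encoded by phi(0)=phi(b1+b2)=0, phi'(0)=b1, phi'(b1+b2)=-b2, and
   positivity of the metric by phi > 0 on (0, b1+b2).  phi is taken as the
   (real-analytic) ODE solution on all of R, so that derivatives at the
   endpoint tau = b1 + b2 (u = 0) make sense. *)
Definition football_profile (b1 b2 : R) (phi : R -> R) : Prop :=
  (exists c b : R, forall t : R, is_derive phi t (- t + c * phi t + b)) /\
  phi 0 = 0 /\ phi (b1 + b2) = 0 /\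
  Derive phi 0 = b1 /\ Derive phi (b1 + b2) = - b2 /\
  (forall t : R, 0 < t < b1 + b2 -> 0 < phi t).

Definition rescaled_profile (b1 b2 a : R) (phi : R -> R) (u : R) : R :=
  a / b2 * phi (b1 + b2 - u / a).

Definition limit_profile (u : R) : R := (exp u - 1) / exp u.

(* Main.v *)
Require Import Defs.
From Stdlib Require Import Reals.
From Coquelicot Require Import Coquelicot.
From Stdlib Require Import Lra Psatz.
Open Scope R_scope.

Lemma cont_of_der f x l : is_derive f x l -> continuity_pt f x.
Proof.
  intro H. apply (derivable_continuous_pt f x (exist _ l (proj1 (is_derive_Reals _ _ _) H))).
Qed.

Lemma mvt_le (f df : R -> R) x y : x <= y ->
  (forall t, x <= t <= y -> is_derive f t (df t)) ->
  (forall t, x <= t <= y -> 0 <= df t) -> f x <= f y.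
Proof.
  intros Hxy Hd Hp.
  destruct (MVT_gen f x y df) as [c [Hc Heq]].
  - intros t Ht. apply Hd. rewrite Rmin_left in Ht by lra. rewrite Rmax_right in Ht by lra. lra.
  - intros t Ht. rewrite Rmin_left in Ht by lra. rewrite Rmax_right in Ht by lra.
    eapply cont_of_der. apply Hd. lra.
  - rewrite Rmin_left in Hc by lra. rewrite Rmax_right in Hc by lra.
    assert (0 <= df c * (y - x)) by (apply Rmult_le_pos; [apply Hp; lra | lra]). lra.
Qed.

Lemma mvt_lt (f df : R -> R) x y : x < y ->
  (forall t, x <= t <= y -> is_derive f t (df t)) ->
  (forall t, x <= t <= y -> 0 <= df t) ->
  (forall t, x < t < y -> 0 < df t) -> f x < f y.
Proof.
  intros Hxy Hd Hp Hs.
  set (x1 := x + (y - x)/3). set (x2 := x + 2*(y-x)/3).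
  assert (f x <= f x1).
  { apply (mvt_le f df); unfold x1, x2 in *; try lra; intros t Ht; [apply Hd|apply Hp]; lra. }
  assert (f x2 <= f y).
  { apply (mvt_le f df); unfold x1, x2 in *; try lra; intros t Ht; [apply Hd|apply Hp]; lra. }
  destruct (MVT_gen f x1 x2 df) as [c [Hc Heq]].
  - intros t Ht. apply Hd. unfold x1, x2 in *. rewrite Rmin_left in Ht by lra. rewrite Rmax_right in Ht by lra. lra.
  - intros t Ht. unfold x1, x2 in *. rewrite Rmin_left in Ht by lra. rewrite Rmax_right in Ht by lra.
    eapply cont_of_der. apply Hd. lra.
  - unfold x1, x2 in *. rewrite Rmin_left in Hc by lra. rewrite Rmax_right in Hc by lra.
    assert (0 < df c * (x + 2 * (y - x) / 3 - (x + (y - x) / 3))) by (apply Rmult_lt_0_compat; [apply Hs; lra | lra]). lra.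
Qed.

Lemma is_derive_val (f : R -> R) x l l' : is_derive f x l -> l = l' -> is_derive f x l'.
Proof. intros H ->. exact H. Qed.

Lemma ode_zero (w : R -> R) c : (forall t, is_derive w t (c * w t)) -> w 0 = 0 -> forall t, w t = 0.
Proof.
  intros Hw H0.
  set (v := fun t => exp (- c * t) * w t).
  assert (Hv : forall t, is_derive v t 0).
  { intro t. unfold v.
    assert (He : is_derive (fun t => exp (-c * t)) t (-c * exp (-c*t))).
    { auto_derive; auto; ring. }
    pose proof (is_derive_mult _ _ t _ _ He (Hw t) Rmult_comm) as HH.
    eapply is_derive_val; [exact HH|]. unfold plus, mult; simpl. ring. }
  intro t.
  assert (Hc : forall x y, x <= y -> v x = v y).
  { intros x y Hxy. apply Rle_antisym.
    - apply (mvt_le v (fun _ => 0)); [exact Hxy| intros; apply Hv| intros; lra].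
    - assert (- v x <= - v y); [|lra].
      apply (mvt_le (fun s => - v s) (fun _ => 0)); [exact Hxy| |intros; lra].
      intros s _. eapply is_derive_val; [apply (is_derive_opp v s 0); apply Hv| ]. unfold opp; simpl; ring. }
  assert (Hvt : v t = v 0).
  { destruct (Rle_lt_dec 0 t); [symmetry|]; apply Hc; lra. }
  unfold v in Hvt. rewrite H0, Rmult_0_r in Hvt.
  pose proof (exp_pos (- c * t)).
  destruct (Rmult_integral _ _ Hvt); [lra | auto].
Qed.

Definition gfun (al be ga : R) (u : R) := al + be*u + ga*exp(-u).

Lemma Dn_g al be ga : forall j u, Derive_n (gfun al be ga) (S j) u =
  (match j with O => be | _ => 0 end) + ga * (-1)^(S j) * exp(-u).
Proof.
  induction j as [|j IH]; intro u.
  - simpl. apply is_derive_unique. unfold gfun. auto_derive; auto. ring.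
  - change (Derive_n (gfun al be ga) (S (S j)) u) with (Derive (Derive_n (gfun al be ga) (S j)) u).
    rewrite (Derive_ext _ (fun u => (match j with O => be | _ => 0 end) + ga * (-1)^(S j) * exp(-u)) u IH).
    apply is_derive_unique. auto_derive; auto. simpl. ring.
Qed.

Definition Hf b1 b2 x := exp (x*(b1+b2)) * (1 - b1*x) / (1 + b2*x).
Definition Kf b1 b2 x := exp (x*(b1+b2)) * (b1+b2) / (1 + b2*x)^2.
Definition Hd b1 b2 x := Kf b1 b2 x * (x * ((b2-b1) - b1*b2*x)).

Lemma Hder b1 b2 x : 1 + b2*x <> 0 -> is_derive (Hf b1 b2) x (Hd b1 b2 x).
Proof.
  intro Hn. unfold Hf, Hd, Kf. auto_derive; auto. field. auto.
Qed.

Lemma Kpos b1 b2 x : 0 < b1 -> 0 < b2 -> 0 < 1 + b2*x -> 0 < Kf b1 b2 x.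
Proof.
  intros. unfold Kf. apply Rdiv_lt_0_compat.
  - apply Rmult_lt_0_compat; [apply exp_pos|lra].
  - apply pow_lt; lra.
Qed.

Lemma Hf0 b1 b2 : Hf b1 b2 0 = 1.
Proof. unfold Hf. rewrite Rmult_0_l, exp_0. field. Qed.

Lemma root_big b1 b2 r : 0 < b1 < b2 -> r <> 0 -> 0 < 1 + b2*r -> Hf b1 b2 r = 1 ->
  b2 - b1 < b1*b2*r.
Proof.
  intros [h1 h2] hr hp hH.
  destruct (Rlt_or_le (b2 - b1) (b1*b2*r)) as [h|h]; [exact h|exfalso].
  destruct (Rlt_or_le r 0) as [hn|hn].
  - assert (- Hf b1 b2 r < - Hf b1 b2 0); [|rewrite hH, Hf0 in *; lra].
    apply (mvt_lt (fun x => - Hf b1 b2 x) (fun x => - Hd b1 b2 x)); [lra| | |].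
    + intros t Ht. eapply is_derive_val; [apply (is_derive_opp (Hf b1 b2) t); apply Hder; nra|]. unfold opp; simpl; ring.
    + intros t Ht. unfold Hd. assert (0 < Kf b1 b2 t) by (apply Kpos; nra).
      assert (0 <= (- t) * ((b2-b1) - b1*b2*t)) by (apply Rmult_le_pos; nra). nra.
    + intros t Ht. unfold Hd. assert (0 < Kf b1 b2 t) by (apply Kpos; nra).
      assert (0 < (- t) * ((b2-b1) - b1*b2*t)) by (apply Rmult_lt_0_compat; nra). nra.
  - assert (Hf b1 b2 0 < Hf b1 b2 r); [|rewrite hH, Hf0 in *; lra].
    apply (mvt_lt (Hf b1 b2) (Hd b1 b2)); [lra| | |].
    + intros t Ht. apply Hder; nra.
    + intros t Ht. unfold Hd. assert (0 < Kf b1 b2 t) by (apply Kpos; nra).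
      assert (b1*b2*t <= b1*b2*r) by (apply Rmult_le_compat_l; nra).
      assert (0 <= t * ((b2-b1) - b1*b2*t)) by (apply Rmult_le_pos; nra). nra.
    + intros t Ht. unfold Hd. assert (0 < Kf b1 b2 t) by (apply Kpos; nra).
      assert (b1*b2*t < b1*b2*r) by (apply Rmult_lt_compat_l; nra).
      assert (0 < t * ((b2-b1) - b1*b2*t)) by (apply Rmult_lt_0_compat; nra). nra.
Qed.

Lemma root_dec b1 b2 a c : 0 < b1 < b2 -> b2 - b1 < b1*b2*a -> a < c -> Hf b1 b2 c < Hf b1 b2 a.
Proof.
  intros [h1 h2] ha hac.
  assert (0 < b1*b2) by nra.
  assert (0 < a) by (destruct (Rlt_or_le 0 a); auto; nra).
  assert (- Hf b1 b2 a < - Hf b1 b2 c); [|lra].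
  apply (mvt_lt (fun x => - Hf b1 b2 x) (fun x => - Hd b1 b2 x)); [lra| | |].
  + intros t Ht. eapply is_derive_val; [apply (is_derive_opp (Hf b1 b2) t); apply Hder; nra|]. unfold opp; simpl; ring.
  + intros t Ht. unfold Hd. assert (0 < Kf b1 b2 t) by (apply Kpos; nra).
    assert (b1*b2*a <= b1*b2*t) by (apply Rmult_le_compat_l; nra).
    assert (0 <= t * (b1*b2*t - (b2-b1))) by (apply Rmult_le_pos; nra). nra.
  + intros t Ht. unfold Hd. assert (0 < Kf b1 b2 t) by (apply Kpos; nra).
    assert (b1*b2*a <= b1*b2*t) by (apply Rmult_le_compat_l; nra).
    assert (0 < t * (b1*b2*t - (b2-b1))) by (apply Rmult_lt_0_compat; nra). nra.
Qed.

Lemma root_unique b1 b2 a c : 0 < b1 < b2 -> a <> 0 -> c <> 0 -> 0 < 1 + b2*a -> 0 < 1 + b2*c ->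
  Hf b1 b2 a = 1 -> Hf b1 b2 c = 1 -> a = c.
Proof.
  intros hb ha hc hpa hpc Ha Hc.
  pose proof (root_big b1 b2 a hb ha hpa Ha).
  pose proof (root_big b1 b2 c hb hc hpc Hc).
  destruct (Rtotal_order a c) as [h|[h|h]]; auto.
  - pose proof (root_dec b1 b2 a c hb H h). lra.
  - pose proof (root_dec b1 b2 c a hb H0 h). lra.
Qed.
Theorem lemma2p3 :
  forall (L : R), 0 < L ->
  forall (k : nat) (eps : R), 0 < eps ->
  exists delta : R, 0 < delta /\
    forall (b1 b2 a : R) (phi : R -> R),
      0 < b1 -> b1 < b2 -> b1 / b2 < delta ->
      football_a b1 b2 a -> L < a * (b1 + b2) ->
      football_profile b1 b2 phi ->
      forall (j : nat) (u : R), (j <= k)%nat -> 0 <= u <= L ->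
        Rabs (Derive_n (rescaled_profile b1 b2 a phi) j u
              - Derive_n limit_profile j u) < eps.
Proof.
  intros L HL k eps Heps.
  pose proof (exp_pos L) as HeL.
  assert (HL1 : 1 + L < exp L) by (apply exp_ineq1; lra).
  set (kap := 1 - (1+L)/exp L).
  assert (Hkap : 0 < kap).
  { unfold kap. assert ((1+L)/exp L < 1); [|lra].
    apply (Rmult_lt_reg_r (exp L)); auto. field_simplify; lra. }
  exists (kap*eps/(L+1)). split.
  { apply Rdiv_lt_0_compat; [apply Rmult_lt_0_compat|]; lra. }
  intros b1 b2 a phi h1 h12 hr [[ha1 ha2] haeq] hL [[c [b Hd]] [p0 [pT [d0 [dT _]]]]] j u hj hu.
  set (T := b1 + b2) in *.
  assert (hb : b = b1).
  { rewrite (is_derive_unique _ _ _ (Hd 0)) in d0. rewrite p0 in d0. lra. }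
  subst b.
  assert (hc : c <> 0).
  { intro hc0. subst c.
    set (w := fun t => phi t - (- t^2/2 + b1 * t)).
    assert (Hw : forall t, is_derive w t (0 * w t)).
    { intro t. unfold w. eapply is_derive_val.
      - apply (is_derive_minus phi (fun t => - t^2/2 + b1*t)); [apply Hd|].
        auto_derive; auto.
      - unfold minus, plus, opp; simpl. lra. }
    pose proof (ode_zero w 0 Hw) as Hz.
    assert (w T = 0) by (apply Hz; unfold w; rewrite p0; simpl; lra).
    unfold w in H. rewrite pT in H.
    assert (T * (T - 2*b1) = 0) by lra.
    destruct (Rmult_integral _ _ H0); unfold T in *; lra. }
  set (P := fun t => (1 - b1*c)/c^2 * (1 - exp (c*t)) + t/c).
  assert (HP : forall t, phi t = P t).
  { set (w := fun t => phi t - P t).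
    assert (Hw : forall t, is_derive w t (c * w t)).
    { intro t. unfold w. eapply is_derive_val.
      - apply (is_derive_minus phi P); [apply Hd|].
        unfold P. auto_derive; auto.
      - unfold minus, plus, opp, P; simpl. field. auto. }
    pose proof (ode_zero w c Hw) as Hz.
    intro t. assert (w t = 0) by (apply Hz; unfold w, P; rewrite p0, Rmult_0_r, exp_0; field; auto).
    unfold w in H. lra. }
  assert (E1 : (1 - b1*c) * exp (c*T) = 1 + b2*c).
  { assert (Z : (1 - b1*c) * (1 - exp (c*T)) + c*T = 0).
    { replace ((1 - b1*c) * (1 - exp (c*T)) + c*T) with (c^2 * P T) by (unfold P; field; auto).
      rewrite <- HP, pT. ring. }
    unfold T in *. lra. }
  assert (hpc : 0 < 1 + b2*c).
  { destruct (Rlt_or_le 0 (1 + b2*c)) as [h|h]; auto. exfalso.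
    assert (c < 0) by nra.
    pose proof (exp_pos (c*T)).
    assert (0 < (1 - b1*c) * exp (c*T)) by (apply Rmult_lt_0_compat; nra). lra. }
  assert (Hc1 : Hf b1 b2 c = 1).
  { unfold Hf. fold T. replace (exp (c*T) * (1-b1*c)) with ((1 - b1*c)*exp(c*T)) by ring. rewrite E1. field. lra. }
  assert (E2 : (1 - a*b1) * exp (a*T) = 1 + a*b2).
  { assert (exp (- (a*T)) * exp (a*T) = 1) by (rewrite <- exp_plus; replace (- (a*T) + a*T) with 0 by ring; apply exp_0).
    fold T in haeq.
    assert (haeq' : (a*b1 - 1 + (a*b2+1)*exp(-(a*T))) * exp(a*T) = 0) by (rewrite haeq; ring).
    replace ((a*b1 - 1 + (a*b2+1)*exp(-(a*T))) * exp(a*T)) with ((a*b1-1)*exp(a*T) + (a*b2+1)*(exp(-(a*T))*exp(a*T))) in haeq' by ring.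
    rewrite H in haeq'. lra. }
  assert (ha0 : 0 < a) by lra.
  assert (hab1 : a*b1 < 1).
  { apply (Rmult_lt_compat_r b1) in ha2; auto. replace (1/b1*b1) with 1 in ha2 by (field; lra). lra. }
  assert (Ha1 : Hf b1 b2 a = 1).
  { unfold Hf. fold T. replace (exp (a*T) * (1-b1*a)) with ((1 - a*b1)*exp(a*T)) by ring. rewrite E2. field. nra. }
  assert (hca : a = c) by (apply (root_unique b1 b2 a c); auto; nra).
  subst c.
  set (m := 1/(a*b2)).
  assert (hb2 : 0 < b2) by lra.
  assert (hm : 0 < m) by (unfold m; apply Rdiv_lt_0_compat; nra).
  assert (HR : forall v, rescaled_profile b1 b2 a phi v = gfun (1+m) (-m) (-(1+m)) v).
  { intro v. unfold rescaled_profile, gfun. rewrite HP. unfold P. fold T.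
    replace (a * (T - v/a)) with (a*T + - v) by (field; lra).
    rewrite exp_plus.
    replace (exp (a*T)) with ((1 + a*b2)/(1 - a*b1)) by (rewrite <- E2; field; lra).
    unfold m, T. field. repeat split; lra. }
  assert (HLm : forall v, limit_profile v = gfun 1 0 (-1) v).
  { intro v. unfold limit_profile, gfun. rewrite exp_Ropp. field. pose proof (exp_pos v); lra. }
  assert (Hkb : kap <= a*b1).
  { set (x := a*T) in *.
    pose proof (exp_pos x) as Hex.
    assert (Hx : exp x = exp L * exp (x - L)) by (rewrite <- exp_plus; f_equal; ring).
    pose proof (exp_ineq1_le (x - L)) as Hi.
    assert (H1 : (1 + x) * exp L <= (1 + L) * exp x).
    { rewrite Hx. assert ((1+x) <= (1+L)*(1 + (x - L))) by nra.
      assert ((1+L)*(1 + (x - L)) <= (1+L) * exp (x-L)) by (apply Rmult_le_compat_l; lra).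
      nra. }
    assert (H2 : (1 - a*b1) * exp x <= 1 + x) by (rewrite E2; unfold x, T; nra).
    assert (H3 : (1 - a*b1) * exp x * exp L <= (1 + L) * exp x) by nra.
    assert (H4 : (1 - a*b1) * exp L <= 1 + L).
    { apply (Rmult_le_reg_r (exp x)); auto. nra. }
    unfold kap. assert ((1 - a*b1) <= (1+L)/exp L); [|lra].
    apply (Rmult_le_reg_r (exp L)); auto. field_simplify; lra. }
  assert (Hab2 : (L+1) < a*b2*eps).
  { assert (hr' : b1 * (L+1) < kap*eps*b2).
    { apply (Rmult_lt_compat_r (b2*(L+1))) in hr; [|nra].
      replace (b1/b2 * (b2*(L+1))) with (b1*(L+1)) in hr by (field; lra).
      replace (kap*eps/(L+1) * (b2*(L+1))) with (kap*eps*b2) in hr by (field; lra). exact hr. }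
    assert (kap*(L+1) <= a*b1*(L+1)) by (apply Rmult_le_compat_r; lra).
    assert (a*(b1*(L+1)) < a*(kap*eps*b2)) by (apply Rmult_lt_compat_l; lra).
    assert (kap * (L+1) < kap * (a*b2*eps)) by nra.
    apply (Rmult_lt_reg_l kap); auto. }
  assert (HmL : m * (L+1) < eps).
  { unfold m. apply (Rmult_lt_reg_r (a*b2)); [nra|]. field_simplify; try nra. }
  pose proof (exp_pos (-u)) as HX.
  assert (HX1 : exp (-u) <= 1).
  { assert (exp (-u) * exp u = 1) by (rewrite <- exp_plus; replace (-u+u) with 0 by ring; apply exp_0).
    pose proof (exp_ineq1_le u). nra. }
  assert (HX2 : 1 - u <= exp (-u)) by (pose proof (exp_ineq1_le (-u)); lra).
  destruct j as [|j].
  - simpl. rewrite HR, HLm. unfold gfun.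
    apply Rabs_def1; nra.
  - rewrite (Derive_n_ext _ _ _ _ HR), (Derive_n_ext _ _ _ _ HLm), !Dn_g.
    destruct j as [|j].
    + simpl. apply Rabs_def1; nra.
    + replace ((0 + - (1 + m) * (-1) ^ S (S j) * exp (- u) - (0 + -1 * (-1) ^ S (S j) * exp (- u))))
        with ((- m * exp (-u)) * (-1) ^ S (S j)) by ring.
      rewrite Rabs_mult, pow_1_abs, Rmult_1_r.
      apply Rabs_def1; nra.
Qed.
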